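(* Let $\mathcal{P}=\bigcup_n \mathcal{P}_n$ be a p-quasirandom family of permutations. Then for every fixed word $\sigma=\sigma_1\ldots\sigma_k$ of $k$ distinct positive integers, the probability that a uniformly random $\pi\in\mathcal{P}_n$ contains $\sigma$ as a subsequence tends to $1/k!$ as $n\to\infty$ (over those $n$ with $\mathcal{P}_n\neq\emptyset$).
   Context: A permutation $\pi=\pi_1\ldots\pi_n\in\mathcal{S}_n$ contains a word $\sigma=\sigma_1\ldots\sigma_k$ of distinct letters as a subsequence if there are indices $i_1<\cdots<i_k$ with $\pi_{i_1}=\sigma_1,\ldots,\pi_{i_k}=\sigma_k$. Let $\mathcal{P}_n\subseteq\mathcal{S}_n$ be nonempty for infinitely many $n$ and $\mathcal{P}=\bigcup_n\mathcal{P}_n$. For $\tau\in\mathcal{S}_k$ and $\mathcal{P}_n\ne\emptyset$, let $f(n,\tau)$ be the fraction of permutations in $\mathcal{P}_n$ containing $\tau$ as a subsequence. $\mathcal{P}$ is p-quasirandom if for every $k\ge1$, $\lim_{n\to\infty}\max_{\tau\in\mathcal{S}_k}|f(n,\tau)-1/k!|=0$, the limit taken over $n$ with $\mathcal{P}_n\neq\emptyset$. *)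

(* Defs.v *)
From mathcomp Require Import all_boot all_order all_fingroup all_algebra.
Set Implicit Arguments. Unset Strict Implicit. Unset Printing Implicit Defensive.
Import Order.TTheory GRing.Theory Num.Theory.

Definition oneline (n : nat) (pi : 'S_n) : seq nat :=
  [seq (pi i).+1 | i <- enum 'I_n].

Definition contains_word (n : nat) (pi : 'S_n) (w : seq nat) : bool :=
  subseq w (oneline pi).

Definition perm_family := forall n : nat, {set 'S_n}.

Definition inf_nonempty (P : perm_family) : Prop :=
  forall N : nat, exists n, (N <= n)%N /\ P n != set0.

Definition pfrac (P : perm_family) (n : nat) (w : seq nat) : rat :=
  (#|[set pi in P n | contains_word pi w]|%:R / #|P n|%:R)%R.

Definition p_quasirandom (P : perm_family) : Prop :=
  forall k : nat, (1 <= k)%N ->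
  forall eps : rat, (0 < eps)%R ->
  exists N : nat, forall n : nat, (N <= n)%N -> P n != set0 ->
  forall tau : 'S_k, (`|pfrac P n (oneline tau) - (k`!%:R)^-1| < eps)%R.

(* Main.v *)
Require Import Defs.
From mathcomp Require Import all_boot all_order all_fingroup all_algebra.
Import Order.TTheory GRing.Theory Num.Theory.
Set Implicit Arguments. Unset Strict Implicit. Unset Printing Implicit Defensive.

Lemma card_count (T : finType) (p : pred T) : #|[set x | p x]| = count p (enum T).
Proof. by rewrite -sum1dep_card sum1_count enumT. Qed.

Lemma relabelK (a b : seq nat) : uniq a -> uniq b -> perm_eq a b ->
  cancel (fun x => nth x b (index x a)) (fun x => nth x a (index x b)).
Proof.
move=> ua ub pab x; have sz := perm_size pab.
case xa: (x \in a).
  have ilt : index x a < size b by rewrite -sz index_mem.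
  by rewrite index_uniq // (set_nth_default x) ?nth_index // index_mem.
have xb : x \notin b by rewrite -(perm_mem pab) xa.
have e : nth x b (index x a) = x by rewrite nth_default // memNindex ?xa // sz.
by rewrite e nth_default // memNindex // sz.
Qed.

Lemma map_relabel (a b : seq nat) : uniq a -> perm_eq a b ->
  map (fun x => nth x b (index x a)) a = b.
Proof.
move=> ua pab; have sz := perm_size pab.
apply: (@eq_from_nth _ 0); first by rewrite size_map sz.
move=> i; rewrite size_map => ilt.
rewrite (nth_map 0) // index_uniq //; apply: set_nth_default; by rewrite -sz.
Qed.

Lemma perm_map_stable (g h : nat -> nat) (s t : seq nat) : cancel g h -> uniq s ->
  {subset s <= [pred x | g x \in s]} -> perm_eq t s -> perm_eq (map g t) s.
Proof.
move=> gK us gs pts; have ut : uniq t by rewrite (perm_uniq pts).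
have umt : uniq (map g t) by rewrite (map_inj_uniq (can_inj gK)).
have sub : {subset map g t <= s}.
  by move=> y /mapP [x xt ->]; apply: gs; rewrite -(perm_mem pts).
have [_ eqm] := uniq_min_size umt sub (eq_leq (esym (etrans (size_map g t) (perm_size pts)))).
exact: uniq_perm.
Qed.

Definition relabel (a b : seq nat) x := nth x b (index x a).

Lemma relabel_stable (a b s : seq nat) : perm_eq a b -> {subset b <= s} ->
  {subset s <= [pred x | relabel a b x \in s]}.
Proof.
move=> pab bs x xs; rewrite inE /relabel; have sz := perm_size pab.
case xa: (x \in a).
  by apply: bs; apply: mem_nth; rewrite -sz index_mem.
by rewrite nth_default // memNindex ?xa // sz.
Qed.

Lemma subseq_map_can (g h : nat -> nat) (a b : seq nat) : cancel g h ->
  subseq (map g a) (map g b) = subseq a b.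
Proof.
move=> gK; apply/idP/idP; last exact: map_subseq.
by move=> /(map_subseq h); rewrite !(mapK gK).
Qed.

Lemma count_relabel (s sg rho : seq nat) : uniq s -> uniq sg -> {subset sg <= s} ->
  perm_eq rho sg ->
  count (subseq rho) (permutations s) = count (subseq sg) (permutations s).
Proof.
move=> us usg sgs prs.
have ur : uniq rho by rewrite (perm_uniq prs).
have rs : {subset rho <= s} by move=> x; rewrite (perm_mem prs); apply: sgs.
set g := relabel rho sg; set h := relabel sg rho.
have gK : cancel g h := relabelK ur usg prs.
have hK : cancel h g by apply: relabelK; rewrite // perm_sym.
have sr : perm_eq sg rho by rewrite perm_sym.
have gs := relabel_stable prs sgs; have hs := relabel_stable sr rs.
set T := permutations s.
have pT : perm_eq T (map (map g) T).
  apply: uniq_perm; first exact: permutations_uniq.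
    by rewrite (map_inj_uniq (inj_map (can_inj gK))) permutations_uniq.
  move=> t; apply/idP/idP.
    move=> tT; rewrite -[t](mapK hK); apply: map_f.
    by rewrite mem_permutations (perm_map_stable hK us hs) // -mem_permutations.
  move=> /mapP [t0 t0T ->].
  by rewrite mem_permutations (perm_map_stable gK us gs) // -mem_permutations.
symmetry; rewrite (seq.permP pT) count_map; apply: eq_in_count => t _ /=.
by rewrite -{1}(map_relabel ur prs) -/g (subseq_map_can _ _ gK).
Qed.

Lemma count_split (U V : eqType) (f : U -> V) (R : seq V) (T : seq U) : uniq R ->
  count (fun t => f t \in R) T = \sum_(r <- R) count (fun t => f t == r) T.
Proof.
move=> uR; elim: T => [|t T IH] /=; first by rewrite big1.
rewrite big_split /= IH; congr (_ + _).
have -> : forall R', \sum_(r <- R') (f t == r : nat) = count (fun r => f t == r) R'.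
  by elim=> [|r R' IHR]; rewrite ?big_nil ?big_cons //= IHR.
by rewrite -(count_uniq_mem _ uR); apply: eq_count => r; rewrite eq_sym.
Qed.

Lemma count_subseq_perms (s sg : seq nat) : uniq s -> uniq sg -> {subset sg <= s} ->
  count (subseq sg) (permutations s) * (size sg)`! = (size s)`!.
Proof.
move=> us usg sgs; set T := permutations s.
have uT : forall t, t \in T -> uniq t.
  by move=> t; rewrite mem_permutations => /perm_uniq ->.
rewrite -(size_permutations us) -/T -[size T]count_predT.
rewrite [RHS](@eq_in_count _ _ (fun t => [seq x <- t | x \in sg] \in permutations sg)); last first.
  move=> t tT /=; rewrite mem_permutations; symmetry; apply: uniq_perm => //.
    by apply: filter_uniq; apply: uT.
  move=> x; rewrite mem_filter; apply/andP/idP => [[]//|xs]; split => //.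
  by move: tT; rewrite mem_permutations => /perm_mem ->; apply: sgs.
rewrite [RHS]count_split ?permutations_uniq //.
rewrite (eq_big_seq (fun _ => count (subseq sg) T)); last first.
  move=> r; rewrite mem_permutations => prs.
  rewrite -(count_relabel us usg sgs prs).
  apply: eq_in_count => t /uT ut /=; apply/eqP/idP.
    move=> <-; exact: filter_subseq.
  move=> /(subseq_uniqP ut) {1}->; apply: eq_filter => x.
  by rewrite (perm_mem prs).
by rewrite big_const_seq count_predT iter_addn_0 size_permutations // mulnC.
Qed.

Lemma oneline_uniq n (pi : 'S_n) : uniq (oneline pi).
Proof.
rewrite /oneline map_inj_uniq ?enum_uniq // => i j /succn_inj /val_inj.
exact: perm_inj.
Qed.

Lemma oneline_perm n (pi : 'S_n) : perm_eq (oneline pi) (iota 1 n).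
Proof.
have sub : {subset oneline pi <= iota 1 n}.
  by move=> x /mapP [i _ ->]; rewrite mem_iota /= add1n ltnS ltn_ord.
have [_ e] := uniq_min_size (oneline_uniq pi) sub
  (eq_leq (etrans (size_iota 1 n) (esym (etrans (size_map _ _) (size_enum_ord n))))).
by apply: uniq_perm; rewrite ?oneline_uniq ?iota_uniq.
Qed.

Lemma nth_oneline n (pi : 'S_n) (i : 'I_n) : nth 0 (oneline pi) i = (pi i).+1.
Proof. by rewrite /oneline (nth_map i) ?size_enum_ord // nth_ord_enum. Qed.

Lemma oneline_inj n : injective (@oneline n).
Proof.
move=> a b e; apply/permP => i.
have := congr1 (fun s => nth 0 s i) e; rewrite /= !nth_oneline => -[].
exact: val_inj.
Qed.

Lemma oneline_surj k (s : seq nat) : perm_eq s (iota 1 k.+1) ->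
  exists tau : 'S_k.+1, oneline tau = s.
Proof.
move=> ps; have us : uniq s by rewrite (perm_uniq ps) iota_uniq.
have sz : size s = k.+1 by rewrite (perm_size ps) size_iota.
have bnd : forall i : 'I_k.+1, 0 < nth 0 s i <= k.+1.
  move=> i; have : nth 0 s i \in iota 1 k.+1.
    by rewrite -(perm_mem ps) mem_nth // sz.
  by rewrite mem_iota add1n ltnS.
pose f (i : 'I_k.+1) : 'I_k.+1 := inord (nth 0 s i).-1.
have finj : injective f.
  move=> i j; rewrite /f => /(congr1 (@nat_of_ord _)); rewrite !inordK; first last.
  - by case/andP: (bnd i) => h1 h2; rewrite prednK.
  - by case/andP: (bnd j) => h1 h2; rewrite prednK.
  move=> e; apply: val_inj; apply/eqP; rewrite -(nth_uniq 0 _ _ us) ?sz ?ltn_ord //.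
  have hi := bnd i; have hj := bnd j.
  by rewrite -(prednK (proj1 (andP hi))) -(prednK (proj1 (andP hj))) e.
exists (perm finj); apply: (@eq_from_nth _ 0).
  by rewrite size_map size_enum_ord sz.
move=> i; rewrite size_map size_enum_ord => ilt.
rewrite (nth_oneline _ (Ordinal ilt)) permE /f inordK; first by rewrite prednK //; case/andP: (bnd (Ordinal ilt)).
by case/andP: (bnd (Ordinal ilt)) => h1 h2; rewrite prednK.
Qed.

Lemma restrict_perm K n (pi : 'S_n) : K <= n ->
  perm_eq [seq x <- oneline pi | x \in iota 1 K] (iota 1 K).
Proof.
move=> Kn; apply: uniq_perm; rewrite ?filter_uniq ?oneline_uniq ?iota_uniq //.
move=> x; rewrite mem_filter (perm_mem (oneline_perm pi)) !mem_iota.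
apply/andP/idP => [[]//|h]; split => //.
by case/andP: h => h1 h2; rewrite h1 /= (leq_trans h2) // add1n ltnS.
Qed.

Lemma card_sum (T : finType) (A : {set T}) (p : pred T) :
  #|[set x in A | p x]| = \sum_(x in A) (p x : nat).
Proof.
rewrite -sum1dep_card big_mkcondr /=; apply: eq_bigr => x _; by case: (p x).
Qed.

Lemma contains_restrict K n (pi : 'S_n) (tau : 'S_K) : K <= n ->
  contains_word pi (oneline tau) = (oneline tau == [seq x <- oneline pi | x \in iota 1 K]).
Proof.
move=> Kn; rewrite /contains_word; apply/idP/eqP => [|->]; last exact: filter_subseq.
move=> /(subseq_uniqP (oneline_uniq pi)) {1}->; apply: eq_filter => x.
by rewrite (perm_mem (oneline_perm tau)).
Qed.

Lemma card_contains K (sg : seq nat) : uniq sg -> {subset sg <= iota 1 K.+1} ->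
  #|[set tau : 'S_K.+1 | contains_word tau sg]| * (size sg)`! = K.+1`!.
Proof.
move=> usg sgI; rewrite card_count.
rewrite (_ : count _ _ = count (subseq sg) (map (@oneline K.+1) (enum {perm 'I_K.+1}))); last first.
  by rewrite [RHS]count_map enumT.
have pe : perm_eq (map (@oneline K.+1) (enum {perm 'I_K.+1})) (permutations (iota 1 K.+1)).
  apply: uniq_perm; rewrite ?permutations_uniq ?(map_inj_uniq (@oneline_inj _)) ?enum_uniq //.
  move=> t; rewrite mem_permutations; apply/idP/idP.
    by move=> /mapP [tau _ ->]; apply: oneline_perm.
  by move=> /oneline_surj [tau <-]; apply: map_f; rewrite mem_enum.
rewrite (seq.permP pe) count_subseq_perms ?iota_uniq // size_iota //.
Qed.

Theorem mainTheorem1 (P : perm_family) :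
  inf_nonempty P -> p_quasirandom P ->
  forall sigma : seq nat, uniq sigma -> all (fun x => (0 < x)%N) sigma ->
  forall eps : rat, (0 < eps)%R ->
  exists N : nat, forall n : nat, (N <= n)%N -> P n != set0 ->
  (`|pfrac P n sigma - ((size sigma)`!%:R)^-1| < eps)%R.
Proof.
move=> _ Hq sg usg pos eps eps0.
set m := \max_(x <- sg) x.
have sgI : {subset sg <= iota 1 m.+1}.
  move=> x xs; rewrite mem_iota (allP pos x xs) /= add1n ltnS.
  apply: leq_trans (leqnSn _); exact: (@leq_bigmax_seq _ _ predT (fun y => y) x xs isT).
set C := [set tau : 'S_m.+1 | contains_word tau sg].
have hc := card_contains usg sgI; rewrite -/C in hc.
have c0 : 0 < #|C| by move: (fact_gt0 m.+1); rewrite -hc muln_gt0 => /andP[].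
set c := #|C| in hc c0.
pose e' := (eps / c.+1%:R)%R.
have e'0 : (0 < e')%R by rewrite divr_gt0 // ltr0n.
have [N0 HN] := Hq m.+1 isT e' e'0.
exists (maxn N0 m.+1) => n Hn Pn.
have HN0 : N0 <= n by apply: leq_trans Hn; apply: leq_maxl.
have Kn : m.+1 <= n by apply: leq_trans Hn; apply: leq_maxr.
have dec : #|[set pi in P n | contains_word pi sg]| =
    \sum_(tau in C) #|[set pi in P n | contains_word pi (oneline tau)]|.
  rewrite (card_sum (P n) (fun pi => contains_word pi sg)) [RHS](eq_bigr (fun tau => \sum_(pi in P n) (contains_word pi (oneline tau) : nat))); last first.
    by move=> tau _; apply: card_sum.
  rewrite exchange_big /=; apply: eq_bigr => pi _.
  have [tau0 e0] := oneline_surj (restrict_perm pi Kn).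
  rewrite (eq_bigr (fun tau => (tau == tau0 : nat))); last first.
    by move=> tau _; rewrite contains_restrict // -e0 (inj_eq (@oneline_inj _)).
  have cw : contains_word pi sg = (tau0 \in C).
    rewrite inE /contains_word e0 subseq_filter.
    by rewrite (_ : all _ sg = true) //; apply/allP => x /sgI.
  case: (boolP (tau0 \in C)) => t0C.
    rewrite (bigD1 tau0) //= eqxx big1 ?cw ?t0C ?addn0 // => tau /andP [_ ne].
    by rewrite (negbTE ne).
  rewrite big1 ?cw ?(negbTE t0C) // => tau tC; case: eqP => // et.
  by rewrite -et tC in t0C.
have fr : pfrac P n sg = (\sum_(tau in C) pfrac P n (oneline tau))%R.
  by rewrite /pfrac dec natr_sum mulr_suml.
have kinv : (((size sg)`!%:R)^-1 : rat) = (\sum_(tau in C) ((m.+1)`!%:R)^-1)%R.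
  rewrite sumr_const -/c -hc natrM invfM -[RHS]mulr_natr mulrAC mulVf ?mul1r //.
  by rewrite pnatr_eq0 -lt0n.
rewrite fr kinv -sumrB.
apply: (le_lt_trans (ler_norm_sum _ _ _)).
apply: (@le_lt_trans _ _ (\sum_(tau in C) e')%R).
  by apply: ler_sum => tau _; apply: ltW; apply: HN.
rewrite sumr_const -/c.
have <- : (e' *+ c.+1 = eps)%R by rewrite /e' -mulr_natr divfK // pnatr_eq0.
by rewrite mulrSr ltrDl.
Qed.
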